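(* Let $(s,\pi)$ be a plane permutation on $[n]$ with $s=(s_0s_1\cdots s_{n-1})$, let $h=(i,j,j+1,l)$ with $i\le j<j+1\le l$ and $\{i,j,j+1,l\}\subset[n-1]$, and let $(s^h,\pi^h)=\chi_h\circ(s,\pi)$. Below, each $v^r_1,\ldots,v^r_{m_r}$ ($r\in\{i,j,l\}$, $m_r\ge 0$) denotes a (possibly empty) list of further elements. Then, according to how $s_{i-1},s_j,s_l$ lie in the cycles of $\pi$, the cycles of $\pi^h$ containing these elements are as follows: (1) if $\pi$ has cycles $(s_{i-1},v_1^i,\ldots,v_{m_i}^i)$, $(s_j,v_1^j,\ldots,v_{m_j}^j)$, $(s_l,v_1^l,\ldots,v_{m_l}^l)$, then $\pi^h$ has the cycle $(s_{i-1},v_1^j,\ldots,v_{m_j}^j,s_j,v_1^l,\ldots,v_{m_l}^l,s_l,v_1^i,\ldots,v_{m_i}^i)$; (2) if $\pi$ has the cycle $(s_{i-1},v_1^i,\ldots,v_{m_i}^i,s_l,v_1^l,\ldots,v_{m_l}^l,s_j,v_1^j,\ldots,v_{m_j}^j)$, then $\pi^h$ has cycles $(s_{i-1},v_1^j,\ldots,v_{m_j}^j)$, $(s_j,v_1^l,\ldots,v_{m_l}^l)$, $(s_l,v_1^i,\ldots,v_{m_i}^i)$; (3) if $\pi$ has the cycle $(s_{i-1},v_1^i,\ldots,v_{m_i}^i,s_j,v_1^j,\ldots,v_{m_j}^j,s_l,v_1^l,\ldots,v_{m_l}^l)$, then $\pi^h$ has the cycle $(s_{i-1},v_1^j,\ldots,v_{m_j}^j,s_l,v_1^i,\ldots,v_{m_i}^i,s_j,v_1^l,\ldots,v_{m_l}^l)$;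 (4) if $\pi$ has cycles $(s_{i-1},v_1^i,\ldots,v_{m_i}^i,s_j,v_1^j,\ldots,v_{m_j}^j)$, $(s_l,v_1^l,\ldots,v_{m_l}^l)$, then $\pi^h$ has cycles $(s_{i-1},v_1^j,\ldots,v_{m_j}^j)$, $(s_j,v_1^l,\ldots,v_{m_l}^l,s_l,v_1^i,\ldots,v_{m_i}^i)$; (5) if $\pi$ has cycles $(s_{i-1},v_1^i,\ldots,v_{m_i}^i)$, $(s_j,v_1^j,\ldots,v_{m_j}^j,s_l,v_1^l,\ldots,v_{m_l}^l)$, then $\pi^h$ has cycles $(s_{i-1},v_1^j,\ldots,v_{m_j}^j,s_l,v_1^i,\ldots,v_{m_i}^i)$, $(s_j,v_1^l,\ldots,v_{m_l}^l)$; (6) if $\pi$ has cycles $(s_{i-1},v_1^i,\ldots,v_{m_i}^i,s_l,v_1^l,\ldots,v_{m_l}^l)$, $(s_j,v_1^j,\ldots,v_{m_j}^j)$, then $\pi^h$ has cycles $(s_{i-1},v_1^j,\ldots,v_{m_j}^j,s_j,v_1^l,\ldots,v_{m_l}^l)$, $(s_l,v_1^i,\ldots,v_{m_i}^i)$.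
   Context: Permutations of $[n]=\{1,\dots,n\}$ are multiplied as composition of maps, $(\sigma\tau)(x)=\sigma(\tau(x))$. A plane permutation on $[n]$ is a pair $(s,\pi)$ where $s=(s_0s_1\cdots s_{n-1})$ is an $n$-cycle on $[n]$, written with a fixed starting element $s_0$, and $\pi$ is an arbitrary permutation of $[n]$; its diagonal is $D=s\circ\pi^{-1}$. For $h=(i,j,k,l)$ with $i\le j<k\le l$ and $\{i,j,k,l\}\subset[n-1]$, let $s^h$ be the $n$-cycle $(s_0,\dots,s_{i-1},s_k,\dots,s_l,s_{j+1},\dots,s_{k-1},s_i,\dots,s_j,s_{l+1},\dots,s_{n-1})$ obtained by interchanging the blocks $s_i\cdots s_j$ and $s_k\cdots s_l$ (when $k=j+1$ the middle block is empty, and $s^h=(s_0,\dots,s_{i-1},s_k,\dots,s_l,s_i,\dots,s_j,s_{l+1},\dots)$), and let $\pi^h=D^{-1}\circ s^h$, so that $(s^h,\pi^h)$ is a plane permutation with the same diagonal $D$. Write $(s^h,\pi^h)=\chi_h\circ(s,\pi)$; when $k=j+1$, $\chi_h$ is called a transpose. *)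

(* Defs.v *)
From mathcomp Require Import all_boot all_fingroup.
Set Implicit Arguments. Unset Strict Implicit. Unset Printing Implicit Defensive.

Section PlanePerm.
Variable T : finType.

(* composition of maps: (f \o g)(x) = f (g x);  note mathcomp's (g * f)%g x = f (g x) *)
Definition pcomp (f g : {perm T}) : {perm T} := (g * f)%g.

Definition is_ncycle_seq (sq : seq T) (s : {perm T}) : Prop :=
  [/\ uniq sq, size sq = #|T| & forall x, s x = next sq x].

Definition diagonal (s pi : {perm T}) : {perm T} := pcomp s pi^-1.

Definition pi_h (s pi sh : {perm T}) : {perm T} := pcomp (diagonal s pi)^-1 sh.

(* s^h for h = (i,j,k,l): interchange blocks s_i..s_j and s_k..s_l *)
Definition blockswap (sq : seq T) (i j k l : nat) : seq T :=
  take i sq ++ drop k (take l.+1 sq) ++ drop j.+1 (take k sq)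
  ++ drop i (take j.+1 sq) ++ drop l.+1 sq.

Definition has_cycles (p : {perm T}) (cs : seq (seq T)) : Prop :=
  [/\ uniq (flatten cs), all (fun c => c != [::]) cs &
      forall c, c \in cs -> forall x, x \in c -> p x = next c x].
End PlanePerm.

(* Main.v *)
Require Import Defs.
From mathcomp Require Import all_boot all_fingroup.
From mathcomp Require Import zify.
Set Implicit Arguments. Unset Strict Implicit. Unset Printing Implicit Defensive.

Section Gen.
Variable T : finType.

Lemma memT (s : seq T) x : uniq s -> size s = #|T| -> x \in s.
Proof.
move=> Us Ss; have E : #|s| = #|T| by move/card_uniqP: Us => ->.
have := (subset_cardP E (subset_predT (mem s))) x. by rewrite inE.
Qed.

Lemma next_swap (P S : seq T) : uniq (P ++ S) -> next (P ++ S) =1 next (S ++ P).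
Proof. by move=> U x; rewrite -(next_rot (size P) U) rot_size_cat. Qed.

Variables (F G : T -> T) (f : T -> T).
Hypothesis GF : forall x, G x = F (f x).

Lemma blk x0 (v : seq T) : {in v, forall x, f x = x} ->
  path (frel G) x0 v = path (frel F) (f x0) v /\ G (last x0 v) = F (last (f x0) v).
Proof.
case: v => [|y w] fid /=; first by rewrite GF.
have fy : f y = y by apply: fid; rewrite inE eqxx.
rewrite GF; split; last first.
  have: last y w \in y :: w by exact: mem_last.
  by move=> /fid; rewrite GF => ->.
congr (_ && _); apply: (eq_in_path (P := mem (y :: w))).
  move=> u z uin _ /=; by rewrite GF fid.
by apply/allP.
Qed.
End Gen.

Section Six.
Variable T : finType.

Lemma uniq_in_flatten (cs : seq (seq T)) c : uniq (flatten cs) -> c \in cs -> uniq c.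
Proof.
elim: cs => //= c' cs IH; rewrite cat_uniq inE => /and3P[U1 _ U2] /orP[/eqP->//|].
exact: IH.
Qed.

Lemma hc_all (p : {perm T}) cs : has_cycles p cs -> all (fun c => fcycle p c) cs.
Proof.
case=> U _ H; apply/allP => c cin; apply: cycle_from_next.
  exact: uniq_in_flatten U cin.
by move=> x xin /=; rewrite (H c cin x xin).
Qed.

Lemma all_hc (p : {perm T}) cs : uniq (flatten cs) -> all (fun c => c != [::]) cs ->
  all (fun c => fcycle p c) cs -> has_cycles p cs.
Proof.
move=> U N /allP A; split => // c cin x xin.
by rewrite (nextE (A c cin) xin).
Qed.

Variables (pi q : {perm T}) (a b c : T) (vi vj vl : seq T).
Let f x := if x == a then b else if x == b then c else if x == c then a else x.
Hypothesis hq : forall x, q x = pi (f x).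
Let L := a :: b :: c :: vi ++ vj ++ vl.

Lemma fid (v : seq T) : a \notin v -> b \notin v -> c \notin v -> {in v, forall x, f x = x}.
Proof.
move=> ha hb hc x xv; rewrite /f.
case: eqP => [E|_]; first by rewrite -E xv in ha.
case: eqP => [E|_]; first by rewrite -E xv in hb.
case: eqP => [E|_]; first by rewrite -E xv in hc.
by [].
Qed.

Lemma b1 x0 (v : seq T) : {in v, forall x, f x = x} -> fpath q x0 v = fpath pi (f x0) v.
Proof. by move=> hv; case: (blk hq x0 hv). Qed.
Lemma b2 x0 (v : seq T) : {in v, forall x, f x = x} -> q (last x0 v) = pi (last (f x0) v).
Proof. by move=> hv; case: (blk hq x0 hv). Qed.
Lemma fabc : a != b -> a != c -> b != c -> [/\ f a = b, f b = c & f c = a].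
Proof.
move=> nab nac nbc; have nba : b != a by rewrite eq_sym.
have nca : c != a by rewrite eq_sym. have ncb : c != b by rewrite eq_sym.
by split; rewrite /f ?eqxx ?(negbTE nba) ?(negbTE nca) ?(negbTE ncb) ?eqxx.
Qed.

Ltac permtac := apply/seq.permP => p0; rewrite /= ?count_cat /=; lia.

Ltac closer :=
  let Hh := fresh in move=> Hh;
  repeat match goal with [ h : is_true (_ && _) |- _ ] =>
     let h1 := fresh in let h2 := fresh in move/andP: h => [h1 h2] end;
  repeat (apply/andP; split); try done.

Lemma six1 : has_cycles pi [:: a :: vi; b :: vj; c :: vl] -> has_cycles q [:: a :: vj ++ b :: vl ++ c :: vi].
Proof.
move=> H.
have P1 : perm_eq (flatten [:: a :: vi; b :: vj; c :: vl]) L.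
  apply/seq.permP => p0; rewrite /= ?cats0; repeat (rewrite count_cat /=); lia.
have P2 : perm_eq (flatten [:: a :: vj ++ b :: vl ++ c :: vi]) L.
  apply/seq.permP => p0; rewrite /= ?cats0; repeat (rewrite count_cat /=); lia.
have UL : uniq L by rewrite -(perm_uniq P1); case: H.
apply: all_hc; [by rewrite (perm_uniq P2) | by [] |].
have := hc_all H; rewrite /=; repeat (rewrite ?(rcons_cat, cat_path, rcons_path, last_cat) /=).
move: UL; rewrite /L /= !inE !mem_cat !negb_or !cat_uniq.
move=> /andP[/and5P[nab nac avi avj avl] /andP[/and4P[nbc bvi bvj bvl] /andP[/and3P[cvi cvj cvl] _]]].
have [fa fb fc] := fabc nab nac nbc.
have hvi := fid avi bvi cvi; have hvj := fid avj bvj cvj; have hvl := fid avl bvl cvl.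
rewrite !(b1 _ hvi, b1 _ hvj, b1 _ hvl, b2 _ hvi, b2 _ hvj, b2 _ hvl) ?fa ?fb ?fc.
closer.
Qed.

Lemma six2 : has_cycles pi [:: a :: vi ++ c :: vl ++ b :: vj] -> has_cycles q [:: a :: vj; b :: vl; c :: vi].
Proof.
move=> H.
have P1 : perm_eq (flatten [:: a :: vi ++ c :: vl ++ b :: vj]) L.
  apply/seq.permP => p0; rewrite /= ?cats0; repeat (rewrite count_cat /=); lia.
have P2 : perm_eq (flatten [:: a :: vj; b :: vl; c :: vi]) L.
  apply/seq.permP => p0; rewrite /= ?cats0; repeat (rewrite count_cat /=); lia.
have UL : uniq L by rewrite -(perm_uniq P1); case: H.
apply: all_hc; [by rewrite (perm_uniq P2) | by [] |].
have := hc_all H; rewrite /=; repeat (rewrite ?(rcons_cat, cat_path, rcons_path, last_cat) /=).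
move: UL; rewrite /L /= !inE !mem_cat !negb_or !cat_uniq.
move=> /andP[/and5P[nab nac avi avj avl] /andP[/and4P[nbc bvi bvj bvl] /andP[/and3P[cvi cvj cvl] _]]].
have [fa fb fc] := fabc nab nac nbc.
have hvi := fid avi bvi cvi; have hvj := fid avj bvj cvj; have hvl := fid avl bvl cvl.
rewrite !(b1 _ hvi, b1 _ hvj, b1 _ hvl, b2 _ hvi, b2 _ hvj, b2 _ hvl) ?fa ?fb ?fc.
closer.
Qed.

Lemma six3 : has_cycles pi [:: a :: vi ++ b :: vj ++ c :: vl] -> has_cycles q [:: a :: vj ++ c :: vi ++ b :: vl].
Proof.
move=> H.
have P1 : perm_eq (flatten [:: a :: vi ++ b :: vj ++ c :: vl]) L.
  apply/seq.permP => p0; rewrite /= ?cats0; repeat (rewrite count_cat /=); lia.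
have P2 : perm_eq (flatten [:: a :: vj ++ c :: vi ++ b :: vl]) L.
  apply/seq.permP => p0; rewrite /= ?cats0; repeat (rewrite count_cat /=); lia.
have UL : uniq L by rewrite -(perm_uniq P1); case: H.
apply: all_hc; [by rewrite (perm_uniq P2) | by [] |].
have := hc_all H; rewrite /=; repeat (rewrite ?(rcons_cat, cat_path, rcons_path, last_cat) /=).
move: UL; rewrite /L /= !inE !mem_cat !negb_or !cat_uniq.
move=> /andP[/and5P[nab nac avi avj avl] /andP[/and4P[nbc bvi bvj bvl] /andP[/and3P[cvi cvj cvl] _]]].
have [fa fb fc] := fabc nab nac nbc.
have hvi := fid avi bvi cvi; have hvj := fid avj bvj cvj; have hvl := fid avl bvl cvl.
rewrite !(b1 _ hvi, b1 _ hvj, b1 _ hvl, b2 _ hvi, b2 _ hvj, b2 _ hvl) ?fa ?fb ?fc.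
closer.
Qed.

Lemma six4 : has_cycles pi [:: a :: vi ++ b :: vj; c :: vl] -> has_cycles q [:: a :: vj; b :: vl ++ c :: vi].
Proof.
move=> H.
have P1 : perm_eq (flatten [:: a :: vi ++ b :: vj; c :: vl]) L.
  apply/seq.permP => p0; rewrite /= ?cats0; repeat (rewrite count_cat /=); lia.
have P2 : perm_eq (flatten [:: a :: vj; b :: vl ++ c :: vi]) L.
  apply/seq.permP => p0; rewrite /= ?cats0; repeat (rewrite count_cat /=); lia.
have UL : uniq L by rewrite -(perm_uniq P1); case: H.
apply: all_hc; [by rewrite (perm_uniq P2) | by [] |].
have := hc_all H; rewrite /=; repeat (rewrite ?(rcons_cat, cat_path, rcons_path, last_cat) /=).
move: UL; rewrite /L /= !inE !mem_cat !negb_or !cat_uniq.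
move=> /andP[/and5P[nab nac avi avj avl] /andP[/and4P[nbc bvi bvj bvl] /andP[/and3P[cvi cvj cvl] _]]].
have [fa fb fc] := fabc nab nac nbc.
have hvi := fid avi bvi cvi; have hvj := fid avj bvj cvj; have hvl := fid avl bvl cvl.
rewrite !(b1 _ hvi, b1 _ hvj, b1 _ hvl, b2 _ hvi, b2 _ hvj, b2 _ hvl) ?fa ?fb ?fc.
closer.
Qed.

Lemma six5 : has_cycles pi [:: a :: vi; b :: vj ++ c :: vl] -> has_cycles q [:: a :: vj ++ c :: vi; b :: vl].
Proof.
move=> H.
have P1 : perm_eq (flatten [:: a :: vi; b :: vj ++ c :: vl]) L.
  apply/seq.permP => p0; rewrite /= ?cats0; repeat (rewrite count_cat /=); lia.
have P2 : perm_eq (flatten [:: a :: vj ++ c :: vi; b :: vl]) L.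
  apply/seq.permP => p0; rewrite /= ?cats0; repeat (rewrite count_cat /=); lia.
have UL : uniq L by rewrite -(perm_uniq P1); case: H.
apply: all_hc; [by rewrite (perm_uniq P2) | by [] |].
have := hc_all H; rewrite /=; repeat (rewrite ?(rcons_cat, cat_path, rcons_path, last_cat) /=).
move: UL; rewrite /L /= !inE !mem_cat !negb_or !cat_uniq.
move=> /andP[/and5P[nab nac avi avj avl] /andP[/and4P[nbc bvi bvj bvl] /andP[/and3P[cvi cvj cvl] _]]].
have [fa fb fc] := fabc nab nac nbc.
have hvi := fid avi bvi cvi; have hvj := fid avj bvj cvj; have hvl := fid avl bvl cvl.
rewrite !(b1 _ hvi, b1 _ hvj, b1 _ hvl, b2 _ hvi, b2 _ hvj, b2 _ hvl) ?fa ?fb ?fc.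
closer.
Qed.

Lemma six6 : has_cycles pi [:: a :: vi ++ c :: vl; b :: vj] -> has_cycles q [:: a :: vj ++ b :: vl; c :: vi].
Proof.
move=> H.
have P1 : perm_eq (flatten [:: a :: vi ++ c :: vl; b :: vj]) L.
  apply/seq.permP => p0; rewrite /= ?cats0; repeat (rewrite count_cat /=); lia.
have P2 : perm_eq (flatten [:: a :: vj ++ b :: vl; c :: vi]) L.
  apply/seq.permP => p0; rewrite /= ?cats0; repeat (rewrite count_cat /=); lia.
have UL : uniq L by rewrite -(perm_uniq P1); case: H.
apply: all_hc; [by rewrite (perm_uniq P2) | by [] |].
have := hc_all H; rewrite /=; repeat (rewrite ?(rcons_cat, cat_path, rcons_path, last_cat) /=).
move: UL; rewrite /L /= !inE !mem_cat !negb_or !cat_uniq.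
move=> /andP[/and5P[nab nac avi avj avl] /andP[/and4P[nbc bvi bvj bvl] /andP[/and3P[cvi cvj cvl] _]]].
have [fa fb fc] := fabc nab nac nbc.
have hvi := fid avi bvi cvi; have hvj := fid avj bvj cvj; have hvl := fid avl bvl cvl.
rewrite !(b1 _ hvi, b1 _ hvj, b1 _ hvl, b2 _ hvi, b2 _ hvj, b2 _ hvl) ?fa ?fb ?fc.
closer.
Qed.

End Six.

Lemma decomp (T : finType) (x0 : T) (sq : seq T) i j l : 1 <= i -> i <= j -> j < l -> l < size sq ->
  sq = take i.-1 sq ++ nth x0 sq i.-1 :: drop i (take j sq) ++ nth x0 sq j ::
       drop j.+1 (take l sq) ++ nth x0 sq l :: drop l.+1 sq /\
  blockswap sq i j j.+1 l = take i.-1 sq ++ nth x0 sq i.-1 :: drop j.+1 (take l sq) ++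
       nth x0 sq l :: drop i (take j sq) ++ nth x0 sq j :: drop l.+1 sq.
Proof.
move=> i1 ij jl ln.
set A := take i.-1 sq; set B := drop i (take j sq); set C := drop j.+1 (take l sq).
set D := drop l.+1 sq.
have t1 : take i sq = rcons A (nth x0 sq i.-1).
  by rewrite /A -(take_nth x0) ?prednK //; lia.
have t2 : take j sq = take i sq ++ B.
  by rewrite /B -{1}(cat_take_drop i (take j sq)) take_takel.
have t3 : take j.+1 sq = rcons (take j sq) (nth x0 sq j) by rewrite (take_nth x0) //; lia.
have t4 : take l sq = take j.+1 sq ++ C.
  by rewrite /C -{1}(cat_take_drop j.+1 (take l sq)) take_takel.
have t5 : take l.+1 sq = rcons (take l sq) (nth x0 sq l) by rewrite (take_nth x0).
have t6 : sq = take l.+1 sq ++ D by rewrite cat_take_drop.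
have si : size (take i sq) = i by rewrite size_takel //; lia.
have sj : size (take j.+1 sq) = j.+1 by rewrite size_takel //; lia.
split.
  by rewrite {1}t6 t5 t4 t3 t2 t1 -!cats1 -!catA.
rewrite /blockswap.
have -> : drop j.+1 (take l.+1 sq) = rcons C (nth x0 sq l) by rewrite t5 t4 rcons_cat drop_size_cat.
have -> : drop j.+1 (take j.+1 sq) = [::] by rewrite -{1}sj drop_size.
have -> : drop i (take j.+1 sq) = rcons B (nth x0 sq j) by rewrite t3 t2 rcons_cat drop_size_cat.
by rewrite t1 -!cats1 -!catA.
Qed.

Lemma blkf (T : finType) (F f : T -> T) x0 (v : seq T) : {in v, forall x, f x = x} ->
  fpath (fun y => F (f y)) x0 v = fpath F (f x0) v /\ F (f (last x0 v)) = F (last (f x0) v).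
Proof. by move=> hv; have [h1 h2] := blk (F := F) (G := fun y => F (f y)) (fun _ => erefl) x0 hv. Qed.

Lemma fc_gen (T : finType) (F f : T -> T) (B C E : seq T) a b c :
  f a = b -> f b = c -> f c = a -> {in B, forall x, f x = x} -> {in C, forall x, f x = x} ->
  {in E, forall x, f x = x} ->
  fcycle F (a :: B ++ b :: C ++ c :: E) ->
  fcycle (fun y => F (f y)) (a :: C ++ c :: B ++ b :: E).
Proof.
move=> fa fb fc hB hC hE.
have B1 := fun x0 => (blkf F x0 hB).1; have B2 := fun x0 => (blkf F x0 hB).2.
have C1 := fun x0 => (blkf F x0 hC).1; have C2 := fun x0 => (blkf F x0 hC).2.
have E1 := fun x0 => (blkf F x0 hE).1; have E2 := fun x0 => (blkf F x0 hE).2.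
rewrite /=; repeat (rewrite ?(rcons_cat, cat_path, rcons_path, last_cat) /=).
rewrite !(B1, B2, C1, C2, E1, E2) fa fb fc.
by case/andP=> /and5P[-> -> -> -> ->] ->.
Qed.

Lemma key (T : finType) (A B C D : seq T) a b c :
  uniq (A ++ a :: B ++ b :: C ++ c :: D) -> size (A ++ a :: B ++ b :: C ++ c :: D) = #|T| ->
  forall x, next (A ++ a :: C ++ c :: B ++ b :: D) x =
    next (A ++ a :: B ++ b :: C ++ c :: D)
      (if x == a then b else if x == b then c else if x == c then a else x).
Proof.
move=> U S.
set f := fun x => if x == a then b else if x == b then c else if x == c then a else x.
have PP : perm_eq (A ++ a :: B ++ b :: C ++ c :: D) (A ++ a :: C ++ c :: B ++ b :: D).
  apply/seq.permP => p0; repeat (rewrite count_cat /=); lia.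
have U' := U; rewrite (perm_uniq PP) in U'.
have S' := S; rewrite (perm_size PP) in S'.
set p := a :: B ++ b :: C ++ c :: D ++ A.
set p' := a :: C ++ c :: B ++ b :: D ++ A.
have E1 : next (A ++ a :: B ++ b :: C ++ c :: D) =1 next p.
  by move=> y; rewrite next_swap // /p /=; do ?(rewrite -catA /=).
have E2 : next (A ++ a :: C ++ c :: B ++ b :: D) =1 next p'.
  by move=> y; rewrite next_swap // /p' /=; do ?(rewrite -catA /=).
have Up : uniq p.
  by rewrite /p (perm_uniq (_ : perm_eq _ (A ++ a :: B ++ b :: C ++ c :: D))) //; apply/seq.permP => p0; repeat (rewrite count_cat /=); lia.
have Up' : uniq p'.
  by rewrite /p' (perm_uniq (_ : perm_eq _ (A ++ a :: B ++ b :: C ++ c :: D))) //; apply/seq.permP => p0; repeat (rewrite count_cat /=); lia.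
have Sp' : size p' = #|T| by rewrite -S' /p' /=; repeat (rewrite size_cat /=); lia.
move=> x; rewrite E1 E2.
have UL : uniq (a :: b :: c :: B ++ C ++ (D ++ A)).
  by rewrite (perm_uniq (_ : perm_eq _ (A ++ a :: B ++ b :: C ++ c :: D))) //; apply/seq.permP => p0; repeat (rewrite count_cat /=); lia.
move: UL; rewrite /= !inE !mem_cat !negb_or !cat_uniq.
move=> /andP[/and5P[nab nac avi avj avl] /andP[/and4P[nbc bvi bvj bvl] /andP[/and3P[cvi cvj cvl] _]]].
have [fa fb fc] := fabc nab nac nbc.
have hB := fid avi bvi cvi.
have hC := fid avj bvj cvj.
have hE : {in D ++ A, forall x, f x = x} by apply: fid; rewrite mem_cat negb_or ?avl ?bvl ?cvl.
have FC := fc_gen (F := next p) fa fb fc hB hC hE (cycle_next Up).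
exact: (nextE FC (memT x Up' Sp')).
Qed.

Theorem lemma2 (n : nat) (x0 : 'I_n) (sq : seq 'I_n) (s pi sh : {perm 'I_n})
    (i j l : nat) :
  is_ncycle_seq sq s ->
  1 <= i -> i <= j -> j.+1 <= l -> l <= n.-1 ->
  is_ncycle_seq (blockswap sq i j j.+1 l) sh ->
  forall vi vj vl : seq 'I_n,
  let si := nth x0 sq i.-1 in
  let sj := nth x0 sq j in
  let sl := nth x0 sq l in
  let pih := pi_h s pi sh in
  (has_cycles pi [:: si :: vi; sj :: vj; sl :: vl] ->
        has_cycles pih [:: si :: vj ++ sj :: vl ++ sl :: vi]) /\
  (has_cycles pi [:: si :: vi ++ sl :: vl ++ sj :: vj] ->
        has_cycles pih [:: si :: vj; sj :: vl; sl :: vi]) /\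
  (has_cycles pi [:: si :: vi ++ sj :: vj ++ sl :: vl] ->
        has_cycles pih [:: si :: vj ++ sl :: vi ++ sj :: vl]) /\
  (has_cycles pi [:: si :: vi ++ sj :: vj; sl :: vl] ->
        has_cycles pih [:: si :: vj; sj :: vl ++ sl :: vi]) /\
  (has_cycles pi [:: si :: vi; sj :: vj ++ sl :: vl] ->
        has_cycles pih [:: si :: vj ++ sl :: vi; sj :: vl]) /\
  (has_cycles pi [:: si :: vi ++ sl :: vl; sj :: vj] ->
        has_cycles pih [:: si :: vj ++ sj :: vl; sl :: vi]).
Proof.
move=> [Usq Ssq Hs] i1 ij jl ln [Usq' Ssq' Hsh] vi vj vl si sj sl pih.
have ln' : l < size sq by rewrite Ssq card_ord; lia.
have [Esq Esq'] := decomp x0 i1 ij jl ln'.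
have hq : forall x, pih x = pi (if x == si then sj else if x == sj then sl else if x == sl then si else x).
  move=> x; rewrite /pih /pi_h /pcomp /diagonal invMg invgK !permM.
  have -> : sh x = s (if x == si then sj else if x == sj then sl else if x == sl then si else x).
    have K := key (A := take i.-1 sq) (B := drop i (take j sq)) (C := drop j.+1 (take l sq))
      (D := drop l.+1 sq) (a := si) (b := sj) (c := sl).
    rewrite -Esq -Esq' in K.
    by rewrite Hsh Hs K // Ssq.
  by rewrite permK.
split; first exact: six1 hq.
split; first exact: six2 hq.
split; first exact: six3 hq.
split; first exact: six4 hq.
split; first exact: six5 hq.
exact: six6 hq.
Qed.
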